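(* Let $n,m$ be positive integers with $2(m+1)\le n$ and let $H$ be a graph. Then $$\gamma_{gr}(C_n^m\circ H)=\begin{cases}\left\lfloor \frac{n}{m+1}\right\rfloor (\gamma_{gr} (H)-(m+1))+n & \text{if } \gamma_{gr}(H)\geq m+1,\\ 2\gamma_{gr}(H)+n-(2m+2) & \text{if } \gamma_{gr}(H)\leq m.\end{cases}$$
   Context: $C_n^m$ has vertex set $[n]$, distinct vertices adjacent iff their distance in the cycle $1,2,\dots,n,1$ is at most $m$. The lexicographic product $G\circ H$ has vertex set $V(G)\times V(H)$, with $(g_1,h_1)$ adjacent to $(g_2,h_2)$ iff $g_1g_2\in E(G)$, or $g_1=g_2$ and $h_1h_2\in E(H)$. $\gamma_{gr}$ is the Grundy domination number: the maximum length of a sequence $(v_1,\dots,v_k)$ of distinct vertices whose set is dominating and such that each $N[v_i]\setminus\bigcup_{j<i}N[v_j]$ is non-empty ($N[\cdot]$ the closed neighborhood). *)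

(* Defs.v *)
From mathcomp Require Import all_boot.
Set Implicit Arguments. Unset Strict Implicit. Unset Printing Implicit Defensive.

(* A (finite, simple) graph: a finType of vertices with a symmetric,
   irreflexive adjacency relation e. *)

Definition cnbh (T : finType) (e : rel T) (v : T) : {set T} :=
  [set u | (u == v) || e v u].

Fixpoint footprint_ok (T : finType) (e : rel T) (prev s : seq T) : bool :=
  match s with
  | [::] => true
  | v :: s' =>
      [exists w, (w \in cnbh e v) && ~~ has (fun u => w \in cnbh e u) prev]
      && footprint_ok e (v :: prev) s'
  end.

Definition dominating_seq (T : finType) (e : rel T) (s : seq T) : bool :=
  [forall w, has (fun u => w \in cnbh e u) s].

Definition grundy_dom_seq (T : finType) (e : rel T) (s : seq T) : bool :=
  [&& uniq s, dominating_seq e s & footprint_ok e [::] s].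

(* Grundy domination number: maximum length of a Grundy dominating sequence.
   Such a sequence is duplicate-free, so its length is at most #|T|. *)
Definition gamma_gr (T : finType) (e : rel T) : nat :=
  \max_(k < #|T|.+1 | [exists t : k.-tuple T, grundy_dom_seq e t]) k.

Definition cdist (n : nat) (i j : 'I_n) : nat :=
  minn ((i + n - j) %% n) ((j + n - i) %% n).

Arguments cdist : clear implicits.
Definition cycle_pow (n m : nat) : rel 'I_n :=
  fun i j => (i != j) && (cdist n i j <= m).

Definition lexprod (G H : finType) (eG : rel G) (eH : rel H) : rel (G * H) :=
  fun x y => eG x.1 y.1 || ((x.1 == y.1) && eH x.2 y.2).
Arguments cycle_pow : clear implicits.

(* Main.v *)
Require Import Defs.
From mathcomp Require Import all_boot zify.
Set Implicit Arguments. Unset Strict Implicit. Unset Printing Implicit Defensive.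
Module Gen.

Section Generic.
Variables (T : finType) (e : rel T).

Lemma fo_cons prev v s :
  footprint_ok e prev (v :: s) =
  [exists w, (w \in cnbh e v) && ~~ has (fun u => w \in cnbh e u) prev]
  && footprint_ok e (v :: prev) s.
Proof. by []. Qed.

Lemma fo_cat prev s1 s2 :
  footprint_ok e prev (s1 ++ s2) =
  footprint_ok e prev s1 && footprint_ok e (catrev s1 prev) s2.
Proof.
elim: s1 prev => [|v s1 IH] prev /=; first by [].
by rewrite IH andbA.
Qed.

Lemma self_cnbh v : v \in cnbh e v.
Proof. by rewrite inE eqxx. Qed.

Lemma fo_uniq prev s : footprint_ok e prev s -> uniq s && all (fun v => v \notin prev) s.
Proof.
elim: s prev => [|v s IH] prev //=.
case/andP=> /existsP[w /andP[wv nh]] /IH /andP[us /allP al].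
have vp : v \notin prev.
  apply/negP=> vp; move/negP: nh; apply; apply/hasP; by exists v.
rewrite vp us /= andbT.
apply/andP; split.
  by apply/negP=> vs; move: (al v vs); rewrite inE eqxx.
by apply/allP=> u us'; move: (al u us'); rewrite inE negb_or => /andP[].
Qed.

Lemma uniq_size_card (s : seq T) : uniq s -> size s <= #|T|.
Proof. by move/card_uniqP <-; apply: max_card. Qed.

Lemma gamma_ge s : grundy_dom_seq e s -> size s <= gamma_gr e.
Proof.
move=> gs; have /and3P[us _ _] := gs.
have hs : size s < #|T|.+1 by rewrite ltnS uniq_size_card.
rewrite /gamma_gr.
have -> : size s = nat_of_ord (Ordinal hs) by [].
apply: (@leq_bigmax_cond _ (fun k : 'I_#|T|.+1 => [exists t : k.-tuple T, grundy_dom_seq e t]) (fun k => nat_of_ord k)).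
apply/existsP; exists (in_tuple s); by [].
Qed.

Lemma gamma_le B : (forall s, grundy_dom_seq e s -> size s <= B) -> gamma_gr e <= B.
Proof.
move=> H; rewrite /gamma_gr; apply/bigmax_leqP => k /existsP[t gt].
by have := H _ gt; rewrite size_tuple.
Qed.

Lemma extend s : footprint_ok e [::] s ->
  exists t, size s <= size t /\ grundy_dom_seq e t.
Proof.
move Hk: (#|T| - size s) => k; elim: k s Hk => [|k IH] s Hk fs.
  exists s; split => //; rewrite /grundy_dom_seq fs andbT.
  have /andP[us _] := fo_uniq fs; rewrite us /=.
  apply/forallP=> w; apply/negPn/negP => nh.
  have ss : size s = #|T| by have := uniq_size_card us; lia.
  have : w \in s.
    have /card_uniqP cs := us.
    apply/negPn/negP=> ws.
    have : #|predU1 w (mem s)| <= #|T| by apply: max_card.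
    by rewrite cardU1 ws cs ss add1n ltnn.
  move=> ws; move/negP: nh; apply; apply/hasP; exists w => //; exact: self_cnbh.
case dom : (dominating_seq e s).
  exists s; split => //; rewrite /grundy_dom_seq fs dom !andbT.
  by case/andP: (fo_uniq fs).
move/negbT: dom; rewrite /dominating_seq negb_forall => /existsP[w nh].
have fs' : footprint_ok e [::] (rcons s w).
  rewrite -cats1 fo_cat fs /= andbT.
  apply/existsP; exists w; rewrite self_cnbh /=.
  by rewrite -/(rev s) has_rev.
have Hk' : #|T| - size (rcons s w) = k by rewrite size_rcons; lia.
have [t [st gt]] := IH (rcons s w) Hk' fs'.
exists t; split => //; apply: leq_trans st; by rewrite size_rcons.
Qed.

Lemma L1 s : footprint_ok e [::] s -> size s <= gamma_gr e.
Proof. move=> /extend[t [st gt]]; exact: leq_trans st (gamma_ge gt). Qed.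

Lemma L1' s : footprint_ok e [::] s -> ~~ dominating_seq e s -> (size s).+1 <= gamma_gr e.
Proof.
move=> fs; rewrite /dominating_seq negb_forall => /existsP[w nh].
have fs' : footprint_ok e [::] (rcons s w).
  rewrite -cats1 fo_cat fs /= andbT.
  apply/existsP; exists w; rewrite self_cnbh /=.
  by rewrite -/(rev s) has_rev.
by have := L1 fs'; rewrite size_rcons.
Qed.

Lemma attain : 0 < #|T| -> exists s, footprint_ok e [::] s /\ size s = gamma_gr e.
Proof.
move=> _.
rewrite /gamma_gr.
set P := (fun k : 'I_#|T|.+1 => [exists t : k.-tuple T, grundy_dom_seq e t]).
have [s [_ gs]] := extend (erefl true : footprint_ok e [::] [::]).
have Ps : 0 < #|P|.
  apply/card_gt0P.
  have hs : size s < #|T|.+1.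
    by rewrite ltnS; have /and3P[us _ _] := gs; exact: uniq_size_card.
  exists (Ordinal hs); rewrite /P /=; apply/existsP; by exists (in_tuple s).
have [k0 Pk0 ->] := eq_bigmax_cond (fun k : 'I_#|T|.+1 => nat_of_ord k) Ps.
move: Pk0; rewrite /P => /existsP[t /and3P[_ _ ft]].
by exists t; rewrite size_tuple.
Qed.

Lemma fo_nth_gen d prev s : footprint_ok e prev s ->
  forall i, i < size s -> exists w, w \in cnbh e (nth d s i) /\
    ~~ has (fun u => w \in cnbh e u) prev /\
    forall j, j < i -> w \notin cnbh e (nth d s j).
Proof.
elim: s prev => [|v s IH] prev //= /andP[/existsP[w /andP[wv nh]] fs] [|i] hi.
  by exists w; split => //; split.
have [w' [w1 [w2 w3]]] := IH _ fs i hi.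
exists w'; split => //; split.
  by move: w2; rewrite /= negb_or => /andP[].
case=> [|j] hj //=.
  by move: w2; rewrite /= negb_or => /andP[].
exact: w3.
Qed.

End Generic.
End Gen.
Import Gen.
Module Off.

Section Off.
Variables (n m : nat).
Hypothesis n0 : 0 < n.
Hypothesis hnm : 2 * (m + 1) <= n.

Definition off (x y : 'I_n) : nat := (y + n - x) %% n.

Lemma offE (x y : 'I_n) : off x y = if x <= y then y - x else y + n - x.
Proof.
rewrite /off; have hx := ltn_ord x; have hy := ltn_ord y.
case: ifP => h.
  have -> : y + n - x = (y - x) + n by lia.
  rewrite modnDr modn_small //; lia.
rewrite modn_small //; lia.
Qed.

Lemma off_lt x y : off x y < n.
Proof. rewrite offE; have := ltn_ord x; have := ltn_ord y; case: ifP; lia. Qed.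

Lemma off0 x y : (off x y == 0) = (x == y).
Proof.
rewrite offE; have := ltn_ord x; have := ltn_ord y.
case: (eqVneq x y) => [->|/eqP ne]; first by rewrite leqnn subnn.
have ne' : (x : nat) <> y by move=> h; apply: ne; apply: val_inj.
case: ifP; lia.
Qed.

Lemma off_inj g x y : off g x = off g y -> x = y.
Proof.
rewrite !offE => h; apply: val_inj => /=; move: h.
have := ltn_ord x; have := ltn_ord y; have := ltn_ord g.
case: ifP; case: ifP; lia.
Qed.

Lemma off_add x y z : off x z = if off x y + off y z < n then off x y + off y z
  else off x y + off y z - n.
Proof.
have e1 := offE x y; have e2 := offE y z; have e3 := offE x z.
have := ltn_ord x; have := ltn_ord y; have := ltn_ord z.
case: (leqP x y) e1 => h1 e1; case: (leqP y z) e2 => h2 e2;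
  case: (leqP x z) e3 => h3 e3; rewrite e1 e2 e3; case: ifP; lia.
Qed.

Lemma off_sym x y : x != y -> off y x = n - off x y.
Proof.
move=> ne; have ne' : (x : nat) <> y by move=> h; move/eqP: ne; apply; apply: val_inj.
rewrite !offE; have := ltn_ord x; have := ltn_ord y.
case: ifP; case: ifP; lia.
Qed.

Definition adj := cycle_pow n m.

Lemma adj_off x y : adj x y = (0 < off x y) && ((off x y <= m) || (n - m <= off x y)).
Proof.
rewrite /adj /cycle_pow /cdist -/(off y x) -/(off x y).
case: (eqVneq x y) => [->|ne].
  by have /eqP -> : off y y == 0 by rewrite off0.
rewrite /= off_sym //.
have := off_lt x y; have: off x y != 0 by rewrite off0.
move: (off x y) => o.
rewrite geq_min.
case: (leqP (n - o) m); case: (leqP o m); case: (leqP (n - m) o); lia.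
Qed.

Lemma adj_sym x y : adj x y = adj y x.
Proof.
case: (eqVneq x y) => [->//|ne].
rewrite !adj_off (off_sym ne).
have := off_lt x y; have: off x y != 0 by rewrite off0.
move: (off x y) => o.
case: (leqP (n - o) m); case: (leqP o m); case: (leqP (n - m) o); lia.
Qed.

Lemma adj_irr x : adj x x = false.
Proof. by rewrite adj_off; have /eqP -> : off x x == 0 by rewrite off0. Qed.

Definition sh (g : 'I_n) (k : nat) : 'I_n := Ordinal (ltn_pmod (g + k) n0).

Lemma off_sh g k : off g (sh g k) = k %% n.
Proof.
rewrite /off /=.
have hg := ltn_ord g.
rewrite -addnBA; last by apply: ltnW.
rewrite modnDml.
have -> : g + k + (n - g) = k + n by lia.
by rewrite modnDr.
Qed.

End Off.
End Off.
Import Off.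
Module Up1.

Lemma surjpair (A B : Type) (p : A * B) : (p.1, p.2) = p.
Proof. by case: p. Qed.

Lemma count_le1 (T : Type) (p : pred T) d (s : seq T) k :
  (forall i, i < size s -> p (nth d s i) -> i = k) -> count p s <= 1.
Proof.
elim: s k => [|v s IH] k //= H.
case pv: (p v) => /=.
  have k0 : 0 = k by apply: H.
  rewrite add1n ltnS leqn0 -/(count p s) -leqn0 leqNgt -has_count.
  apply/(has_nthP d) => -[i hi pi].
  by have := H i.+1 hi pi; rewrite -k0.
rewrite add0n; apply: (IH k.-1) => i hi pi.
have := H i.+1 hi pi; lia.
Qed.

Section Up.
Variables (n m : nat).
Hypothesis n0 : 0 < n.
Hypothesis hnm : 2 * (m + 1) <= n.
Variables (V : finType) (eH : rel V).
Local Notation adj := (@Off.adj n m).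
Local Notation P := (lexprod adj eH).
Variable S : seq ('I_n * V).
Variable d : 'I_n * V.
Hypothesis legal : footprint_ok P [::] S.

Local Notation s i := (nth d S i).
Let off0 := @Off.off0 n m n0 hnm.
Let off_inj := @Off.off_inj n m n0 hnm.
Let off_lt := @Off.off_lt n m n0 hnm.
Let off_add := @Off.off_add n m n0 hnm.
Let off_sym := @Off.off_sym n m n0 hnm.
Let adj_off := @Off.adj_off n m n0 hnm.
Let adj_sym := @Off.adj_sym n m n0 hnm.
Let adj_irr := @Off.adj_irr n m n0 hnm.
Let off_sh := @Off.off_sh n m n0 hnm.
Definition t (x : 'I_n) := find (fun v : 'I_n * V => v.1 == x) S.
Definition chosen (x : 'I_n) := has (fun v : 'I_n * V => v.1 == x) S.
Definition early x := chosen x && [forall y, adj x y ==> chosen y ==> (t x < t y)].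
Definition rem g y := [&& chosen g, adj g y & [forall z, chosen z ==> adj z y ==> (t g <= t z)]].
Definition cnt x := count (fun v : 'I_n * V => v.1 == x) S.

Lemma cn_adj (u w : 'I_n * V) : adj u.1 w.1 -> w \in cnbh P u.
Proof. by move=> h; rewrite inE /lexprod h orbT. Qed.

Lemma cn_inv (u w : 'I_n * V) : w \in cnbh P u -> w.1 = u.1 \/ adj u.1 w.1.
Proof.
rewrite inE /lexprod => /orP[/eqP->|/orP[h|/andP[/eqP h _]]]; by [left|right|left].
Qed.

Lemma cn_same y h h' : ((y, h) \in cnbh P (y, h')) = (h \in cnbh eH h').
Proof.
rewrite !inE /lexprod /= adj_irr eqxx /=; congr (_ || _).
by apply/eqP/eqP => [[]|->].
Qed.

Lemma t_chosen x : chosen x -> t x < size S /\ (s (t x)).1 = x.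
Proof. move=> c; split; first by rewrite /t -has_find. by have /eqP := nth_find d c. Qed.

Lemma chosen_s i : i < size S -> chosen (s i).1 /\ t (s i).1 <= i.
Proof.
move=> hi; split; first by apply/hasP; exists (s i) => //; exact: mem_nth.
rewrite leqNgt; apply/negP => /(before_find d); by rewrite eqxx.
Qed.

Lemma t_inj x y : chosen x -> chosen y -> t x = t y -> x = y.
Proof.
move=> cx cy e; have [_ hx] := t_chosen cx; have [_ hy] := t_chosen cy.
by rewrite -hx -hy e.
Qed.

Lemma fp i : i < size S -> exists w, w \in cnbh P (s i) /\
  forall j, j < i -> w \notin cnbh P (s j).
Proof. move=> hi; have [w [h1 [_ h3]]] := fo_nth_gen d legal hi; by exists w. Qed.

Lemma notearly x : chosen x -> ~~ early x ->
  exists w, [/\ adj x w, chosen w & t w < t x].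
Proof.
move=> cx; rewrite /early cx /= negb_forall => /existsP[w].
rewrite negb_imply => /andP[a]; rewrite negb_imply => /andP[cw]; rewrite -leqNgt => le.
exists w; split => //; rewrite ltn_neqAle le andbT.
apply/negP=> /eqP e; have exw := t_inj cw cx e; by rewrite exw adj_irr in a.
Qed.

Lemma early_chosen x : early x -> chosen x.
Proof. by case/andP. Qed.

Lemma earlyP x y : early x -> adj x y -> chosen y -> t x < t y.
Proof. by case/andP=> _ /forallP/(_ y) /implyP h a c; move: (h a) => /implyP; apply. Qed.

Lemma early_indep x y : early x -> early y -> adj x y = false.
Proof.
move=> ex ey; apply/negP => a.
have := earlyP ex a (early_chosen ey); have := earlyP ey _ (early_chosen ex).
rewrite adj_sym a => /(_ isT); lia.
Qed.

Lemma remP g y z : rem g y -> chosen z -> adj z y -> t g <= t z.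
Proof. by case/and3P=> _ _ /forallP/(_ z)/implyP h c a; move: (h c) => /implyP; apply. Qed.

Lemma rem_uniq g g' y : rem g y -> rem g' y -> g = g'.
Proof.
move=> r r'; have /and3P[cg ag _] := r; have /and3P[cg' ag' _] := r'.
apply: t_inj => //; apply/eqP; rewrite eqn_leq (remP r) // (remP r') //.
Qed.

Lemma second i j w : i < size S -> j < i -> (s j).1 = (s i).1 ->
  w \in cnbh P (s i) -> (forall j, j < i -> w \notin cnbh P (s j)) ->
  w.1 = (s i).1 /\ forall j', j' < i -> ~~ adj (s j').1 (s i).1.
Proof.
move=> hi hj e wi nd.
have w1 : w.1 = (s i).1.
  case: (cn_inv wi) => // a; have := nd j hj; by rewrite cn_adj // e.
split => // j' hj'; apply/negP => a; have := nd j' hj'; by rewrite cn_adj // w1.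
Qed.


Lemma late1 c i : chosen c -> ~~ early c -> i < size S -> (s i).1 = c -> i = t c.
Proof.
move=> cc ne hi e.
have [_ tle] := chosen_s hi; rewrite e in tle.
have [tlt tc1] := t_chosen cc.
case: (ltngtP i (t c)) => // lt; first lia.
have [w [wi nd]] := fp hi.
have [_ H] := second hi lt (etrans tc1 (esym e)) wi nd.
have [z [a cz tz]] := notearly cc ne.
have [_ zz] := t_chosen cz.
have := H (t z) (ltn_trans tz lt); by rewrite zz e adj_sym a.
Qed.

Lemma cnt_late c : chosen c -> ~~ early c -> cnt c <= 1.
Proof.
move=> cc ne; apply: (@count_le1 _ _ d _ (t c)) => i hi /eqP e.
exact: late1.
Qed.

Lemma cnt0 x : ~~ chosen x -> cnt x = 0.
Proof. by rewrite /chosen has_count -leqNgt leqn0 => /eqP. Qed.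

Definition proj y (l : seq ('I_n * V)) := [seq v.2 | v <- l & v.1 == y].

Lemma proj_ok y prev l : footprint_ok P prev l -> footprint_ok eH (proj y prev) (proj y l).
Proof.
elim: l prev => [|v l IH] prev //= /andP[/existsP[w /andP[wv nh]] fl].
have IH' := IH _ fl.
have pc : forall l', proj y (v :: l') = if v.1 == y then v.2 :: proj y l' else proj y l'.
  by move=> l'; rewrite /proj /=; case: ifP.
rewrite pc; rewrite pc in IH'; case vy: (v.1 == y) IH' => IH' //=.
apply/andP; split => //.
case hp: (has (fun u => u.1 == y) prev).
  have w1 : w.1 = y.
    case: (cn_inv wv) => [->|a]; first by apply/eqP.
    move/hasP: hp => [u up /eqP uy].
    move/negP: nh; case; apply/hasP; exists u => //.
    by apply: cn_adj; rewrite uy -(eqP vy).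
  apply/existsP; exists w.2; apply/andP; split.
    have: w \in cnbh P (v.1, v.2) by rewrite surjpair.
    by rewrite -{1}(surjpair w) w1 -(eqP vy) cn_same.
  apply/negP => /hasP[h' /mapP[u]]; rewrite mem_filter => /andP[/eqP uy up] -> hw.
  move/negP: nh; apply; apply/hasP; exists u => //.
  by rewrite -(surjpair u) -{1}(surjpair w) w1 -uy cn_same.
apply/existsP; exists v.2; rewrite self_cnbh /=.
have -> : proj y prev = [::].
  rewrite /proj; move/negbT: hp; elim: prev {nh IH' fl} => //= u pr IHp.
  by rewrite negb_or => /andP[/negbTE -> /IHp].
by [].
Qed.

Lemma cnt_proj y : cnt y = size (proj y S).
Proof. by rewrite /proj size_map size_filter. Qed.

Lemma cnt_le y : cnt y <= gamma_gr eH.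
Proof. rewrite cnt_proj; apply: L1; exact: (proj_ok y legal). Qed.

Definition Fb c y := [&& chosen c, ~~ early c, rem c y &
  [exists h, ~~ has (fun u => (y, h) \in cnbh P u) (take (t c) S)]].

Lemma has_take_nth (p : pred ('I_n * V)) k : has p (take k S) ->
  exists j, [/\ j < k, j < size S & p (s j)].
Proof.
move/(has_nthP d) => [j]; rewrite size_take => hj.
have hk : j < k by move: hj; case: (ltnP k (size S)) => h1 /= h2; lia.
have hs : j < size S by move: hj; case: (ltnP k (size S)) => h1 /= h2; lia.
rewrite nth_take // => pj; by exists j.
Qed.

Lemma late_F c : chosen c -> ~~ early c -> exists y, Fb c y.
Proof.
move=> cc ne.
have [tlt tc1] := t_chosen cc.
have [w [wi nd]] := fp tlt.
have [z [a cz tz]] := notearly cc ne.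
have [_ zz] := t_chosen cz.
have acw : adj c w.1.
  case: (cn_inv wi) => [e|]; last by rewrite tc1.
  have := nd _ tz; rewrite cn_adj //; by rewrite zz e tc1 adj_sym.
exists w.1; apply/and4P; split => //.
  apply/and3P; split => //; apply/forallP => z'; apply/implyP => cz'; apply/implyP => a'.
  rewrite leqNgt; apply/negP => lt.
  have [_ zz'] := t_chosen cz'.
  have := nd _ lt; by rewrite cn_adj // zz'.
apply/existsP; exists w.2; rewrite surjpair.
apply/negP => /has_take_nth [j [hj _ hw]].
by have := nd _ hj; rewrite hw.
Qed.

Lemma F_inj c c' y : Fb c y -> Fb c' y -> c = c'.
Proof. by case/and4P=> _ _ r _ /and4P[_ _ r' _]; exact: rem_uniq r r'. Qed.

Lemma remF c y : Fb c y -> rem c y.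
Proof. by case/and4P. Qed.

Lemma F_early y c : early y -> Fb c y -> (cnt y).+1 <= gamma_gr eH.
Proof.
move=> ey /and4P[cc ne r /existsP[h nh]].
have /and3P[_ acy _] := r.
have [tlt tc1] := t_chosen cc.
rewrite cnt_proj; apply: L1'; first exact: (proj_ok y legal).
rewrite /dominating_seq negb_forall; apply/existsP; exists h.
apply/negP => /hasP[h' /mapP[v]]; rewrite mem_filter => /andP[/eqP vy vS] -> hv.
pose i := index v S.
have hi : i < size S by rewrite index_mem.
have si : s i = v by rewrite nth_index.
have lt : i < t c.
  rewrite ltnNge; apply/negP => le.
  case: (ltngtP (t c) i) => [lt'|gt|e]; last first.
  - by move: tc1; rewrite e si vy => ecy; rewrite ecy adj_irr in acy.
  - lia.
  have [_ tyle] := chosen_s hi; rewrite si vy in tyle.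
  case: (ltngtP (t y) i) => [lty|gty|ety]; last first.
  - have := earlyP ey (_ : adj y c) cc; rewrite adj_sym acy => /(_ isT).
    by rewrite ety; lia.
  - lia.
  have [w [wi nd]] := fp hi.
  have ey1 := (t_chosen (early_chosen ey)).2.
  have [_ H] := second hi lty (etrans ey1 (esym (etrans (f_equal fst si) vy))) wi nd.
  by have := H _ lt'; rewrite tc1 si vy acy.
move/negP: nh; apply; apply/hasP; exists v.
  by rewrite -si -(nth_take d lt); apply: mem_nth; rewrite size_take; case: (ltnP (t c) (size S)) => h1 /=; lia.
by rewrite -(surjpair v) -vy cn_same.
Qed.


Lemma exit g g' y z : 0 < off g y -> off g y < off g g' -> off g g' < off g z ->
  adj y z -> adj g z || adj g' z.
Proof.
move=> h1 h2 h3.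
have e1 := off_add g y z; have e2 := off_add g g' z.
have l1 := off_lt g z; have l2 := off_lt y z; have l3 := off_lt g' z.
rewrite !adj_off.
move: e1 e2; case: ifP => c1 e1; case: ifP => c2 e2; lia.
Qed.

Section Arc.
Variables g g' : 'I_n.
Hypotheses (eg : early g) (eg' : early g') (ne : g != g').
Hypothesis mini : forall g'', early g'' -> g'' != g -> off g g' <= off g g''.

Lemma adj_inner y z : 0 < off g y < off g g' -> chosen z -> adj z y ->
  t z < t g -> t z < t g' -> 0 < off g z < off g g'.
Proof.
move=> /andP[y1 y2] cz a tzg tzg'.
case: (ltngtP (off g z) (off g g')) => [lt|gt|eq].
- apply/andP; split => //; rewrite lt0n off0; apply/negP => /eqP e; by rewrite e ltnn in tzg.
- have := exit y1 y2 gt; rewrite adj_sym a => /(_ isT) /orP[] a'.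
    by have := earlyP eg a' cz; lia.
  by have := earlyP eg' a' cz; lia.
- have e := off_inj eq; by rewrite e ltnn in tzg'.
Qed.

Lemma Q_empty z : chosen z -> 0 < off g z < off g g' -> t z < t g -> t z < t g' -> False.
Proof.
move: {2}(t z).+1 (ltnSn (t z)) => k; elim: k z => [|k IH] z //.
rewrite ltnS => hk cz inz tzg tzg'.
case ez: (early z).
  have /andP[z1 z2] := inz.
  have zg : z != g.
    apply/eqP => e; move: z1; rewrite e lt0n off0; by rewrite eqxx.
  have := mini ez zg; lia.
have [w [a cw tw]] := notearly cz (negbT ez).
have inw := adj_inner inz cw (_ : adj w z) (ltn_trans tw tzg) (ltn_trans tw tzg').
have hw : t w < k by move: tw hk; clear; lia.
apply: (IH w) => //; [apply: inw; by rewrite adj_sym | exact: ltn_trans tw tzg | exact: ltn_trans tw tzg'].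
Qed.

Definition winR x := [forall y, (0 < off x y <= m) ==> rem x y].
Definition winL x := [forall y, (n - m <= off x y) ==> rem x y].

Lemma win : winR g || winL g'.
Proof.
have nadj := early_indep eg eg'.
have D0 : 0 < off g g' by rewrite lt0n off0.
have Dm : m < off g g' < n - m.
  move: nadj; rewrite adj_off D0 /=; have := off_lt g g'; lia.
have cg := early_chosen eg; have cg' := early_chosen eg'.
case: (ltngtP (t g) (t g')) => [lt|gt|eq].
- apply/orP; left; apply/forallP => y; apply/implyP => /andP[y1 y2].
  apply/and3P; split => //; first by rewrite adj_off y1 y2.
  apply/forallP => z; apply/implyP => cz; apply/implyP => a.
  rewrite leqNgt; apply/negP => tz.
  apply: (Q_empty cz _ tz (ltn_trans tz lt)).
  apply: (adj_inner _ cz a tz (ltn_trans tz lt)); lia.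
- apply/orP; right; apply/forallP => y; apply/implyP => y1.
  have ly := off_lt g' y.
  have e := off_add g g' y.
  have iny : 0 < off g y < off g g' by move: e; case: ifP => c e; lia.
  apply/and3P; split => //; first by rewrite adj_off; lia.
  apply/forallP => z; apply/implyP => cz; apply/implyP => a.
  rewrite leqNgt; apply/negP => tz.
  apply: (Q_empty cz _ (ltn_trans tz gt) tz).
  exact: (adj_inner iny cz a (ltn_trans tz gt) tz).
- by move: ne; rewrite (t_inj cg cg' eq) eqxx.
Qed.

End Arc.


Definition E := [set x | early x].
Definition Rm := [set y | [exists g, early g && rem g y]].
Definition nxt g := odflt g [pick g' | [&& early g', g' != g &
  [forall g'', (early g'' && (g'' != g)) ==> (off g g' <= off g g'')]]].

Lemma nxtP g : 1 < #|E| -> early g -> [/\ early (nxt g), nxt g != g &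
  forall g'', early g'' -> g'' != g -> off g (nxt g) <= off g g''].
Proof.
move=> cE eg.
have [g1 g1E] : exists g1, g1 \in E :\ g.
  apply/card_gt0P; move: cE; rewrite (cardsD1 g E) inE eg; lia.
have Pg1 : early g1 && (g1 != g) by move: g1E; rewrite !inE andbC.
case: (@arg_minnP _ g1 (fun x => early x && (x != g)) (fun x => off g x) Pg1) => i /andP[ei ig] imin.
rewrite /nxt; case: pickP => [g' /and3P[eg' g'g /forallP H]|/(_ i)] /=.
  split => // g'' eg'' g''g; have := H g''; by rewrite eg'' g''g.
rewrite ei ig /= => /negP; case; apply/forallP => g''; apply/implyP => /andP[e1 e2].
by apply: imin; rewrite e1 e2.
Qed.

Lemma nxt_inj g1 g2 : 1 < #|E| -> early g1 -> early g2 -> nxt g1 = nxt g2 -> g1 = g2.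
Proof.
move=> cE e1 e2 eq.
case: (eqVneq g1 g2) => // ne.
have [_ n1 m1] := nxtP cE e1; have [_ n2 m2] := nxtP cE e2.
rewrite eq in n1 m1.
set g' := nxt g2 in n1 m1 n2 m2 eq.
have h1 := m1 g2 e2 (_ : g2 != g1); rewrite eq_sym ne in h1; have {}h1 := h1 isT.
have h2 := m2 g1 e1 ne.
have s12 := off_sym ne.
have a := off_add g2 g1 g'.
have p1 : 0 < off g1 g' by rewrite lt0n off0 eq_sym.
have p2 : 0 < off g2 g' by rewrite lt0n off0 eq_sym.
have := off_lt g1 g2; have := off_lt g2 g1; have := off_lt g1 g'; have := off_lt g2 g'.
have : 0 < off g1 g2 by rewrite lt0n off0.
move: a; case: ifP => c a; lia.
Qed.

Lemma offR g (j : 'I_m) : off g (sh n0 g j.+1) = j.+1.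
Proof. rewrite off_sh modn_small //; have := ltn_ord j; lia. Qed.

Lemma offL g (j : 'I_m) : off g (sh n0 g (n - j.+1)) = n - j.+1.
Proof. rewrite off_sh modn_small //; have := ltn_ord j; lia. Qed.

Lemma Rm_em : 1 < #|E| -> #|E| * m <= #|Rm|.
Proof.
move=> cE.
pose r (g : 'I_n) := if winR g then g else nxt g.
pose zf (p : 'I_n * 'I_m) : 'I_n :=
  if winR p.1 then sh n0 p.1 p.2.+1 else sh n0 (nxt p.1) (n - p.2.+1).
have zR : forall g (j : 'I_m), early g -> early (r g) /\ rem (r g) (zf (g, j)).
  move=> g j eg; rewrite /r /zf /=.
  have [en nn mn] := nxtP cE eg.
  case wg: (winR g).
    split => //; move/forallP: wg => /(_ (sh n0 g j.+1)) /implyP; apply.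
    rewrite offR; have := ltn_ord j; lia.
  split => //.
  have := win eg en (_ : g != nxt g) mn; rewrite eq_sym nn wg /= => /(_ isT) /forallP.
  move=> /(_ (sh n0 (nxt g) (n - j.+1))) /implyP; apply.
  rewrite offL; have := ltn_ord j; lia.
have sub : zf @: (setX E setT) \subset Rm.
  apply/subsetP => y /imsetP[[g j]]; rewrite inE /= inE in_setT andbT => eg ->.
  have [er rr] := zR g j eg.
  by rewrite inE; apply/existsP; exists (r g); rewrite er.
have inj : {in setX E setT &, injective zf}.
  move=> [g1 j1] [g2 j2]; rewrite !inE /= !andbT => e1 e2 eq.
  have [_ r1] := zR g1 j1 e1; have [_ r2] := zR g2 j2 e2.
  rewrite eq in r1; have rr := rem_uniq r1 r2.
  have [en1 nn1 _] := nxtP cE e1; have [en2 nn2 _] := nxtP cE e2.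
  case w1: (winR g1); case w2: (winR g2); move: eq rr; rewrite /zf /r /= w1 w2 => eq rr.
  - move: eq; rewrite rr => /(congr1 (off g2)); rewrite !offR => [[/val_inj ->]].
    by [].
  - move: eq; rewrite rr => /(congr1 (off (if winR g2 then g2 else nxt g2))).
    rewrite w2 ?offR ?offL; move: (ltn_ord j1) (ltn_ord j2) hnm; clear; lia.
  - move: eq; rewrite rr => /(congr1 (off (if winR g2 then g2 else nxt g2))).
    rewrite w2 ?offR ?offL; move: (ltn_ord j1) (ltn_ord j2) hnm; clear; lia.
  - have g12 := nxt_inj cE e1 e2 rr.
    move: eq; rewrite rr g12 => /(congr1 (off (nxt g2))); rewrite !offL => h.
    have : (j1 : nat) = j2 by move: h (ltn_ord j1) (ltn_ord j2) hnm; clear; lia.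
    by move/val_inj ->.
have := subset_leq_card sub; rewrite (card_in_imset inj) cardsX cardsT card_ord.
by [].
Qed.


Lemma first_early : 0 < size S -> early (s 0).1 /\ t (s 0).1 = 0.
Proof.
move=> h; have [c0 t0] := chosen_s h; have tz : t (s 0).1 = 0 by lia.
split => //; apply/andP; split => //; apply/forallP => y; apply/implyP => a; apply/implyP => cy.
rewrite tz lt0n; apply/negP => /eqP ty.
have e := t_inj c0 cy (etrans tz (esym ty)); by rewrite e adj_irr in a.
Qed.

Lemma Rm_2m : 0 < size S -> 2 * m <= #|Rm|.
Proof.
move=> h; have [e0 t0] := first_early h; set g0 := (s 0).1 in e0 t0.
pose zf (p : bool * 'I_m) : 'I_n := if p.1 then sh n0 g0 p.2.+1 else sh n0 g0 (n - p.2.+1).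
have inR : forall p, zf p \in Rm.
  move=> [b j]; rewrite inE; apply/existsP; exists g0; rewrite e0 /=.
  apply/and3P; split; [exact: early_chosen | | ].
    rewrite adj_off /zf /=; case: b; rewrite ?offR ?offL; have := ltn_ord j; lia.
  by apply/forallP => z; rewrite t0 leq0n !implybT.
have inj : injective zf.
  move=> [b1 j1] [b2 j2] /(congr1 (off g0)); rewrite /zf /=.
  have h1 := ltn_ord j1; have h2 := ltn_ord j2.
  case: b1; case: b2; rewrite ?offR ?offL => h3; try lia;
    have : (j1 : nat) = j2 by lia.
  - by move/val_inj ->.
  - by move/val_inj ->.
have sub : zf @: [set: bool * 'I_m] \subset Rm by apply/subsetP => y /imsetP[p _ ->].
have := subset_leq_card sub; rewrite (card_imset _ inj) cardsT card_prod card_bool card_ord.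
by [].
Qed.


Lemma size_sum (l : seq ('I_n * V)) :
  size l = \sum_(x : 'I_n) count (fun v : 'I_n * V => v.1 == x) l.
Proof.
elim: l => [|v l IH] /=; first by rewrite big1.
rewrite big_split /= -IH (bigD1 v.1) //= eqxx big1 ?add1n //.
by move=> x /negbTE; rewrite eq_sym => ->.
Qed.

Definition L := [set x | chosen x && ~~ early x].
Definition Fp := [set y | [exists c, Fb c y]].

Lemma L_Fp : #|L| <= #|Fp|.
Proof.
pose fF x := odflt x [pick y | Fb x y].
have fFP : forall x, x \in L -> Fb x (fF x).
  move=> x; rewrite inE => /andP[cx nx]; rewrite /fF; case: pickP => [y //|/= H].
  have [y Fy] := late_F cx nx; by rewrite H in Fy.
have inj : {in L &, injective fF}.
  move=> x1 x2 h1 h2 e; have := fFP _ h1; rewrite e => F1; exact: F_inj F1 (fFP _ h2).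
have sub : fF @: L \subset Fp.
  apply/subsetP => y /imsetP[x hx ->]; rewrite inE; apply/existsP; exists x; exact: fFP.
by have := subset_leq_card sub; rewrite (card_in_imset inj).
Qed.

Lemma sumE_le : \sum_(x in E) cnt x + #|Fp :&: E| <= #|E| * gamma_gr eH.
Proof.
have -> : #|Fp :&: E| = \sum_(x in E) (x \in Fp : nat).
  rewrite -sum1_card.
  have -> : \sum_(x in E) (x \in Fp : nat) = \sum_(x in E | x \in Fp) 1.
    by rewrite big_mkcondr; apply: eq_bigr => x _; case: (x \in Fp).
  by apply: eq_bigl => x; rewrite !inE andbC.
rewrite -big_split /= -sum_nat_const; apply: leq_sum => x; rewrite inE => ex.
case fx: (x \in Fp) => /=.
  move: fx; rewrite inE => /existsP[c Fc]; rewrite addn1; exact: F_early ex Fc.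
by rewrite addn0 cnt_le.
Qed.


Lemma cardU_disj (A B : {set 'I_n}) : (forall y, y \in A -> y \in B -> False) ->
  #|A :|: B| = #|A| + #|B|.
Proof.
move=> H; rewrite cardsU.
suff -> : #|A :&: B| = 0 by rewrite subn0.
apply/eqP; rewrite cards_eq0; apply/eqP/setP => y; rewrite !inE.
apply/negP => /andP[a b]; exact: H a b.
Qed.

Lemma disj : #|Fp :\: E| + #|Rm| + #|E| <= n.
Proof.
rewrite -cardU_disj; last first.
  move=> y; rewrite !inE => /andP[ny /existsP[c /and4P[cc nc rc _]]] /existsP[g /andP[eg rg]].
  by move: nc; rewrite (rem_uniq rc rg) eg.
rewrite -cardU_disj; last first.
  move=> y; rewrite !inE => /orP[/andP[ny _]|/existsP[g /andP[eg rg]]] ey; first by rewrite ey in ny.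
  have /and3P[_ a _] := rg; by rewrite early_indep in a.
by have := max_card (mem ((Fp :\: E) :|: Rm :|: E)); rewrite card_ord.
Qed.

Lemma main_count : size S + #|Rm| + #|E| <= #|E| * gamma_gr eH + n.
Proof.
have h1 : size S <= \sum_(x in E) cnt x + #|L|.
  rewrite size_sum (bigID (fun x => x \in E)) /= leq_add2l.
  apply: (@leq_trans (\sum_(x | x \notin E) (x \in L : nat))).
    apply: leq_sum => x; rewrite inE => nx.
    case cx: (chosen x).
      have -> : x \in L by rewrite inE cx nx.
      exact: cnt_late.
    by move: (cnt0 (negbT cx)); rewrite /cnt => ->.
  rewrite -sum1_card.
  have -> : \sum_(x in L) 1 = \sum_x (x \in L : nat).
    by rewrite big_mkcond /=; apply: eq_bigr => x _; case: (x \in L).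
  rewrite [X in _ <= X](bigID (fun x => x \in E)) /=; exact: leq_addl.
have h2 := L_Fp.
have h3 := sumE_le.
have h4 := disj.
have h5 := cardsID E Fp.
lia.
Qed.

End Up.
End Up1.
Import Up1.
Module Low.

Section Low.
Variables (n m : nat).
Hypothesis n0 : 0 < n.
Hypothesis m0 : 0 < m.
Hypothesis hnm : 2 * (m + 1) <= n.
Variables (V : finType) (eH : rel V).
Local Notation adj := (@Off.adj n m).
Local Notation P := (lexprod adj eH).
Let off0 := @Off.off0 n m n0 hnm.
Let adj_off := @Off.adj_off n m n0 hnm.
Let adj_sym := @Off.adj_sym n m n0 hnm.
Let adj_irr := @Off.adj_irr n m n0 hnm.
Let offE := @Off.offE n m n0 hnm.
Let cn_same := @Up1.cn_same n m n0 hnm V eH.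

Definition o (k : nat) : 'I_n := Ordinal (ltn_pmod k n0).

Lemma val_o k : k < n -> (o k : nat) = k.
Proof. by move=> h; rewrite /= modn_small. Qed.

Lemma adj_o a b : a < b < n -> adj (o a) (o b) = (b - a <= m) || (n - m <= b - a).
Proof.
move=> /andP[ab bn]; rewrite adj_off offE /= !modn_small //; try lia.
have -> : (a <= b) = true by lia.
have -> : 0 < b - a = true by lia.
by [].
Qed.

Lemma notin_far (u w : 'I_n * V) : u.1 != w.1 -> ~~ adj u.1 w.1 -> w \notin cnbh P u.
Proof.
move=> ne na; rewrite inE /lexprod negb_or (negbTE na) /= (negbTE ne) /= andbT.
by apply/eqP => e; move: ne; rewrite e eqxx.
Qed.

Definition B (x : 'I_n) (l : seq V) := [seq (x, h) | h <- l].

Lemma block_ok x hprev l prev : footprint_ok eH hprev l ->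
  (forall u, u \in prev -> (u.1 = x /\ u.2 \in hprev) \/ (u.1 != x /\ ~~ adj u.1 x)) ->
  footprint_ok P prev (B x l).
Proof.
elim: l hprev prev => [|h l IH] hprev prev //= /andP[/existsP[w /andP[wh nh]] fl] Hp.
apply/andP; split.
  apply/existsP; exists (x, w); rewrite cn_same wh /=.
  apply/hasP => -[u up]; case: (Hp u up) => [[u1 u2]|[u1 u2]].
    rewrite -(surjpair u) u1 cn_same => wu.
    by move/negP: nh; apply; apply/hasP; exists u.2.
  by apply/negP; apply: notin_far.
apply: (IH (h :: hprev)) => // u; rewrite inE => /orP[/eqP ->|up].
  by left; rewrite inE eqxx.
case: (Hp u up) => [[u1 u2]|]; last by right.
by left; rewrite inE u2 orbT.
Qed.

Variable (e : nat).
Hypothesis e2 : 1 < e.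
Hypothesis he : e * (m + 1) <= n.
Let r := n - e * (m + 1).
Variable h0 : V.

Lemma lates_ok j0 c (prev : seq ('I_n * V)) : 0 < j0 -> j0 + c <= r + 1 ->
  (forall u, u \in prev -> (u.1 : nat) < j0) ->
  footprint_ok P prev [seq (o j, h0) | j <- iota j0 c].
Proof.
elim: c j0 prev => [|c IH] j0 prev // j1 jc Hp /=.
have hr : r + 2 * m < n by rewrite /r; nia.
apply/andP; split.
  apply/existsP; exists (o (j0 + m), h0); apply/andP; split.
    rewrite inE /lexprod /= adj_o; last by lia.
    by rewrite addKn leqnn /= orbT.
  apply/hasP => -[u up]; apply/negP; apply: notin_far => /=.
    rewrite -val_eqE /= (modn_small (_ : j0 + m < n)); last by lia.
    apply/eqP => h; have := Hp u up; rewrite h; lia.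
  have hu := Hp u up.
  rewrite -(_ : o u.1 = u.1); last by apply: val_inj; rewrite /= modn_small.
  rewrite adj_o; last by have := ltn_ord u.1; lia.
  have := ltn_ord u.1; lia.
apply: IH; [lia | lia |] => u; rewrite inE => /orP[/eqP ->|up].
  by rewrite /= modn_small; lia.
have := Hp u up; lia.
Qed.


Lemma far_o (u : 'I_n) b : u + (m + 1) <= b -> b + (m + 1) <= n ->
  (u != o b) && ~~ adj u (o b).
Proof.
move=> h1 h2.
rewrite -(_ : o u = u); last by apply: val_inj; rewrite /= modn_small.
rewrite adj_o; last by lia.
rewrite -val_eqE /= !modn_small //; lia.
Qed.

Definition lay (u : 'I_n * V) : nat := u.1.

Lemma blocks_ok l i0 c (prev : seq ('I_n * V)) : footprint_ok eH [::] l ->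
  0 < i0 -> i0 + c <= e ->
  (forall u, u \in prev -> lay u + (m + 1) <= r + i0 * (m + 1)) ->
  footprint_ok P prev (flatten [seq B (o (r + i * (m + 1))) l | i <- iota i0 c]).
Proof.
move=> fl; elim: c i0 prev => [|c IH] i0 prev // i1 ic Hp /=.
have hx : r + i0 * (m + 1) + (m + 1) <= n.
  have := leq_mul (_ : i0.+1 <= e) (leqnn (m + 1)); rewrite /r mulSn; lia.
rewrite fo_cat; apply/andP; split.
  apply: (block_ok fl) => u up; right.
  have /andP[a b] := far_o (Hp u up) hx; split => //.
apply: IH; [lia | lia |] => u; rewrite catrevE mem_cat mem_rev => /orP[/mapP[h _ ->]|up] /=.
  rewrite /lay /= modn_small; last by lia.
  rewrite mulSn; lia.
have := Hp u up; rewrite /lay mulSn; lia.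
Qed.

Lemma size_blocks (T : Type) (F : nat -> seq T) k xs : (forall i, size (F i) = k) ->
  size (flatten [seq F i | i <- xs]) = size xs * k.
Proof. by move=> H; elim: xs => //= x xs IH; rewrite size_cat IH H mulSn. Qed.

Definition constr l := B (o 0) l ++ ([seq (o j, h0) | j <- iota 1 r] ++
  flatten [seq B (o (r + i * (m + 1))) l | i <- iota 1 (e - 1)]).

Lemma constr_ok l : footprint_ok eH [::] l -> footprint_ok P [::] (constr l).
Proof.
move=> fl; rewrite /constr fo_cat; apply/andP; split.
  by apply: (block_ok fl).
rewrite fo_cat; apply/andP; split.
  apply: lates_ok; [done | lia |] => u; rewrite catrevE cats0 mem_rev => /mapP[h _ ->] /=.
  by rewrite mod0n.
apply: blocks_ok => //; first lia.
move=> u; rewrite !catrevE cats0 mem_cat !mem_rev => /orP[/mapP[j]|/mapP[h _ ->]] /=.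
  rewrite mem_iota => /andP[j1 j2] ->; rewrite /lay /= modn_small; lia.
by rewrite /lay /= mod0n; lia.
Qed.

Lemma size_constr l : size (constr l) = e * size l + r.
Proof.
rewrite /constr !size_cat size_map (@size_blocks _ _ (size l)); last by move=> i; rewrite size_map.
rewrite !size_map !size_iota.
have -> : e = (e - 1).+1 by lia.
rewrite mulSn; lia.
Qed.

End Low.
End Low.
Import Low.
Unset Implicit Arguments.

Lemma arith (n m k R e G : nat) :
  0 < m -> 2 * (m + 1) <= n -> 1 <= G -> 1 <= e ->
  k + R + e <= e * G + n -> R + e <= n -> 2 * m <= R ->
  (1 < e -> e * m <= R) ->
  k <= (if m + 1 <= G then n %/ (m + 1) * (G - (m + 1)) + n
        else 2 * G + n - (2 * m + 2)).
Proof.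
move=> m0 hnm G1 e1 mc dj R2 Re.
set q := n %/ (m + 1).
have q2 : 2 <= q by rewrite /q leq_divRL // addn1.
case: ifP => hG.
  have hq1 : G - (m + 1) <= q * (G - (m + 1)) by apply: leq_pmull; lia.
  case: (ltngtP e 1) => [lt1|e2|eq1]; first lia; last by subst e; lia.
  have eR := Re e2.
  have eq : e <= q by rewrite /q leq_divRL ?addn1 //; lia.
  have h1 : e * G = e * (G - (m + 1)) + e * (m + 1) by rewrite -mulnDr subnK.
  have h2 : e * (G - (m + 1)) <= q * (G - (m + 1)) by apply: leq_mul.
  have h3 : e * (m + 1) = e * m + e by rewrite mulnDr muln1.
  lia.
case: (ltngtP e 1) => [lt1|e2|eq1]; first lia; last by subst e; lia.
have eR := Re e2.
have h1 : e * (m + 1) = e * G + e * (m + 1 - G) by rewrite -mulnDr subnKC //; lia.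
have h2 : 2 * (m + 1 - G) <= e * (m + 1 - G) by apply: leq_mul.
have h3 : e * (m + 1) = e * m + e by rewrite mulnDr muln1.
have h4 : 2 * (m + 1 - G) = 2 * m + 2 - 2 * G by lia.
lia.
Qed.

Theorem theorem3 (n m : nat) (V : finType) (eH : rel V) :
  0 < n -> 0 < m -> 2 * (m + 1) <= n ->
  0 < #|V| -> symmetric eH -> irreflexive eH ->
  gamma_gr (lexprod (cycle_pow n m) eH) =
  (if m + 1 <= gamma_gr eH
   then n %/ (m + 1) * (gamma_gr eH - (m + 1)) + n
   else 2 * gamma_gr eH + n - (2 * m + 2)).
Proof.
move=> n0 m0 hnm V0 _ _.
have [v _] := card_gt0P V0.
have G1 : 1 <= gamma_gr eH.
  have : footprint_ok eH [::] [:: v] by rewrite /= andbT; apply/existsP; exists v; rewrite self_cnbh.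
  by move/L1.
have [hs [fhs shs]] := attain eH V0.
apply/eqP; rewrite eqn_leq; apply/andP; split.
  apply: gamma_le => S /and3P[_ _ legal].
  pose d := (o n0 0, v).
  have mc := main_count n0 hnm d legal.
  have dj := disj n0 hnm d legal.
  case: (posnP (size S)) => [->//|sp].
  have R2 := Rm_2m n0 hnm d legal sp.
  have [e0 _] := first_early n0 hnm d legal sp.
  have e1 : 0 < #|E m S| by apply/card_gt0P; exists (nth d S 0).1; rewrite inE.
  have Re : 1 < #|E m S| -> #|E m S| * m <= #|Rm m S| by move=> h; exact: (Rm_em n0 hnm d legal h).
  apply: (@arith n m (size S) #|Rm m S| #|E m S|) => //; lia.
case: ifP => hG.
  pose q := n %/ (m + 1).
  have q2 : 2 <= q by rewrite /q leq_divRL // addn1.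
  have hq : q * (m + 1) <= n by rewrite leq_divM.
  have L := L1 (constr_ok n0 m0 hnm q2 hq v fhs).
  rewrite (size_constr n0 m0 hnm q2 hq v hs) shs in L.
  apply: leq_trans L.
  have h1 : q * gamma_gr eH = q * (gamma_gr eH - (m + 1)) + q * (m + 1) by rewrite -mulnDr subnK.
  rewrite -/q; lia.
have hq : 2 * (m + 1) <= n by [].
have L := L1 (constr_ok n0 m0 hnm (leqnn 2) hq v fhs).
rewrite (size_constr n0 m0 hnm (leqnn 2) hq v hs) shs in L.
apply: leq_trans L; lia.
Qed.
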